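(* Let $n\ge 1$. An element $f=(f_m)_{m\ge1}$ of $A^\infty_{fin}$ belongs to $A_{fin}[\widetilde{Sp}(\mathbb{A}^1_n)]$ if and only if $f_m\in R^m_n$ for every $m\ge 1$. Equivalently, $A_{fin}[\widetilde{Sp}(\mathbb{A}^1_n)]=R_n^\infty\cap A^\infty_{fin}$, which is the graded inverse limit $\varprojlim_m\big(R^m_n\cap A_m\big)$.
   Context: Fix $n\ge1$. For $m\ge1$ let $P_m=\mathbb{R}[x_{ij},y_{ij}]_{1\le i\le m,\,1\le j\le n}$, graded by total degree (every variable has degree 1). The symmetric group $S_m$ acts on $P_m$ by permuting the block index $i$ (simultaneously in the $x$ and $y$ variables); let $A_m=P_m^{S_m}$ be the invariants. Let $\pi_m:A_{m+1}\to A_m$ be the map setting $x_{m+1,j}=y_{m+1,j}=0$ for all $j$. Let $A^\infty_{fin}=\varprojlim_m A_m$, the inverse limit taken in the category of graded rings: its elements are finite sums of compatible families $(f_m)_m$ ($f_m\in A_m$, $\pi_m(f_{m+1})=f_m$) of homogeneous elements of a common degree. For a finite multiset $X=\{(\mathbf{x}_1,\mathbf{y}_1),\dots,(\mathbf{x}_r,\mathbf{y}_r)\}$ of points of $\mathbb{R}^n\times\mathbb{R}^n$ and $f\in A^\infty_{fin}$, put $\varphi_X(f)=f_m(\mathbf{x}_1,\mathbf{y}_1,\dots,\mathbf{x}_r,\mathbf{y}_r,0,\dots,0)$ for any $m\ge r$ (this is independent of $m$ and of the ordering). Call a pair $(\mathbf{z},\mathbf{z}')\in\mathbb{R}^n\times\mathbb{R}^n$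 degenerate if $z_j=z'_j$ for some $j$. Define $A_{fin}[\widetilde{Sp}(\mathbb{A}^1_n)]$ to be the set of $f\in A^\infty_{fin}$ such that $\varphi_{X\cup\{(\mathbf{z},\mathbf{z}')\}}(f)=\varphi_X(f)$ for every finite multiset $X$ and every degenerate pair $(\mathbf{z},\mathbf{z}')$. Use the coordinates $\eta_{ij}=y_{ij}-x_{ij}$, $\xi_{ij}=y_{ij}+x_{ij}$, so $P_m=\mathbb{R}[\eta_{ij},\xi_{ij}]$. Define $R^m_n\subseteq P_m$ to be the set of polynomials $f$ such that for every $i\in\{1,\dots,m\}$ and every $k\in\{1,\dots,n\}$, the polynomial obtained from $f$ by substituting $\eta_{ik}=0$ does not depend on any of the variables $\xi_{ij}$ ($1\le j\le n$) or $\eta_{ij}$ ($j\ne k$). Let $R_n^\infty=\varprojlim_m R^m_n$ (graded inverse limit along the same maps). *)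

(* Defs.v *)
From Stdlib Require Import Reals List Arith.
Import ListNotations.
Open Scope R_scope.

(* A point of (R^n x R^n)^(infinitely many blocks): x i j, y i j.
   Block index i is 0-based (block i+1 of the paper); coordinate j is
   0-based, only j < n is relevant. *)
Definition arr := nat -> nat -> R.
Definition func := arr -> arr -> R.

Inductive pexpr : Type :=
| PConst : R -> pexpr
| PX : nat -> nat -> pexpr
| PY : nat -> nat -> pexpr
| PAdd : pexpr -> pexpr -> pexpr
| PMul : pexpr -> pexpr -> pexpr.

Fixpoint peval (e : pexpr) (x y : arr) : R :=
  match e with
  | PConst r => r
  | PX i j => x i j
  | PY i j => y i j
  | PAdd a b => peval a x y + peval b x y
  | PMul a b => peval a x y * peval b x y
  end.

(* e only uses variables x_ij, y_ij with i < m, j < n, i.e. e lies in P_m *)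
Fixpoint bounded (n m : nat) (e : pexpr) : Prop :=
  match e with
  | PConst _ => True
  | PX i j => (i < m)%nat /\ (j < n)%nat
  | PY i j => (i < m)%nat /\ (j < n)%nat
  | PAdd a b => bounded n m a /\ bounded n m b
  | PMul a b => bounded n m a /\ bounded n m b
  end.

Inductive hom_expr : nat -> pexpr -> Prop :=
| hom_zero : forall d, hom_expr d (PConst 0)
| hom_const : forall r, hom_expr 0 (PConst r)
| hom_X : forall i j, hom_expr 1 (PX i j)
| hom_Y : forall i j, hom_expr 1 (PY i j)
| hom_add : forall d a b, hom_expr d a -> hom_expr d b -> hom_expr d (PAdd a b)
| hom_mul : forall d1 d2 a b, hom_expr d1 a -> hom_expr d2 b ->
    hom_expr (d1 + d2) (PMul a b).

Definition hom_poly (n m d : nat) (h : func) : Prop :=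
  exists e, bounded n m e /\ hom_expr d e /\ forall x y, h x y = peval e x y.

Definition is_perm (m : nat) (s : nat -> nat) : Prop :=
  (forall i, (i < m)%nat -> (s i < m)%nat) /\
  (forall i j, (i < m)%nat -> (j < m)%nat -> s i = s j -> i = j) /\
  (forall i, (m <= i)%nat -> s i = i).

(* S_m-invariance: h in A_m (given h in P_m) *)
Definition sym (m : nat) (h : func) : Prop :=
  forall s, is_perm m s -> forall x y,
    h (fun i j => x (s i) j) (fun i j => y (s i) j) = h x y.

(* set the variables of block m (0-based; the (m+1)-th block) to zero *)
Definition zero_block (m : nat) (x : arr) : arr :=
  fun i j => if Nat.eqb i m then 0 else x i j.

Definition compat_at (m : nat) (g : nat -> func) : Prop :=
  forall x y, g m x y = g (S m) (zero_block m x) (zero_block m y).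

(* Graded inverse limit of subsets Q m of P_m: finite sums of compatible
   families (g_m)_{m>=1} of homogeneous elements of a common degree d with
   g_m in Q m.  A family is indexed by nat; index 0 is ignored. *)
Definition graded_lim (n : nat) (Q : nat -> func -> Prop) (f : nat -> func)
  : Prop :=
  exists gs : list (nat * (nat -> func)),
    Forall (fun dg => forall m, (1 <= m)%nat ->
               hom_poly n m (fst dg) (snd dg m) /\ Q m (snd dg m) /\
               compat_at m (snd dg)) gs /\
    forall m, (1 <= m)%nat -> forall x y,
      f m x y = fold_right (fun dg acc => snd dg m x y + acc) 0 gs.

Definition in_Afin (n : nat) (f : nat -> func) : Prop :=
  graded_lim n (fun m h => sym m h) f.

(* phi_X(f), X a finite list (multiset) of pairs of points of R^n x R^n
   (points are nat -> R, only coordinates j < n matter);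
   evaluated in f_m with m = |X| + 1 >= |X|. *)
Definition zero_pt : nat -> R := fun _ => 0.

Definition phi (X : list ((nat -> R) * (nat -> R))) (f : nat -> func) : R :=
  f (S (length X))
    (fun i j => if Nat.ltb i (length X) then fst (nth i X (zero_pt, zero_pt)) j else 0)
    (fun i j => if Nat.ltb i (length X) then snd (nth i X (zero_pt, zero_pt)) j else 0).

Definition degenerate (n : nat) (z z' : nat -> R) : Prop :=
  exists j, (j < n)%nat /\ z j = z' j.

Definition in_Sp (n : nat) (f : nat -> func) : Prop :=
  in_Afin n f /\
  forall X z z', degenerate n z z' -> phi ((z, z') :: X) f = phi X f.

Definition in_eta_xi (h : func) (eta xi : arr) : R :=
  h (fun i j => (xi i j - eta i j) / 2) (fun i j => (xi i j + eta i j) / 2).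

(* R^m_n: for all i < m, k < n, after substituting eta_ik = 0 the
   polynomial does not depend on xi_ij (all j) nor eta_ij (j <> k). *)
Definition R_mem (n m : nat) (h : func) : Prop :=
  forall i k, (i < m)%nat -> (k < n)%nat ->
  forall eta xi eta' xi',
    eta i k = 0 -> eta' i k = 0 ->
    (forall i' j, i' <> i -> eta' i' j = eta i' j /\ xi' i' j = xi i' j) ->
    in_eta_xi h eta' xi' = in_eta_xi h eta xi.

(* Main.v *)
Require Import Defs.
From Stdlib Require Import Reals List Arith Lia Lra Psatz FunctionalExtensionality.
Import ListNotations.
Open Scope R_scope.


Definition fam_ok (n : nat) (Q : nat -> func -> Prop) (gs : list (nat * (nat -> func))) : Prop :=
  Forall (fun dg => forall m, (1 <= m)%nat ->
               hom_poly n m (fst dg) (snd dg m) /\ Q m (snd dg m) /\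
               compat_at m (snd dg)) gs.

Definition Fs (gs : list (nat * (nat -> func))) (m : nat) : func :=
  fun x y => fold_right (fun dg acc => snd dg m x y + acc) 0 gs.

Lemma fam_ok_weaken n (Q Q' : nat -> func -> Prop) gs :
  (forall m h, Q m h -> Q' m h) -> fam_ok n Q gs -> fam_ok n Q' gs.
Proof.
  intros HQ Hg; unfold fam_ok in *; eapply Forall_impl; [|exact Hg].
  intros dg H m Hm; destruct (H m Hm) as [A [B C]]; auto.
Qed.

Lemma peval_local nn mm e x y x' y' :
  Defs.bounded nn mm e -> (forall i j, (i < mm)%nat -> x i j = x' i j /\ y i j = y' i j) ->
  peval e x y = peval e x' y'.
Proof.
  intros Hb Hxy; induction e as [r|a b|a b|? ? ? ?|? ? ? ?]; simpl in *.
  - reflexivity.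
  - destruct Hb as [Hi _]; apply (Hxy _ b Hi).
  - destruct Hb as [Hi _]; apply (Hxy _ b Hi).
  - destruct Hb; rewrite IHe1, IHe2; auto.
  - destruct Hb; rewrite IHe1, IHe2; auto.
Qed.

Lemma Fs_local n Q gs m x y x' y' : fam_ok n Q gs -> (1 <= m)%nat ->
  (forall i j, (i < m)%nat -> x i j = x' i j /\ y i j = y' i j) ->
  Fs gs m x y = Fs gs m x' y'.
Proof.
  intros Hg Hm Hxy; unfold Fs; induction gs as [|dg gs IH]; simpl; auto.
  inversion Hg as [|? ? Hdg Hrest]; subst.
  rewrite IH by auto. f_equal.
  destruct (Hdg m Hm) as [[e [Hb [_ He]]] _].
  rewrite !He. eapply peval_local; eauto.
Qed.

Lemma Fs_sym n Q gs m s x y : fam_ok n Q gs -> (forall m h, Q m h -> sym m h) ->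
  (1<=m)%nat -> is_perm m s ->
  Fs gs m (fun i j => x (s i) j) (fun i j => y (s i) j) = Fs gs m x y.
Proof.
  intros Hg HQ Hm Hs; unfold Fs; induction gs as [|dg gs IH]; simpl; auto.
  inversion Hg as [|? ? Hdg Hrest]; subst.
  rewrite IH by auto. f_equal.
  destruct (Hdg m Hm) as [_ [HQm _]]. apply (HQ _ _ HQm); auto.
Qed.

Lemma Fs_compat n Q gs m x y : fam_ok n Q gs -> (1<=m)%nat ->
  Fs gs m x y = Fs gs (S m) (zero_block m x) (zero_block m y).
Proof.
  intros Hg Hm; unfold Fs; induction gs as [|dg gs IH]; simpl; auto.
  inversion Hg as [|? ? Hdg Hrest]; subst.
  rewrite IH by auto. f_equal.
  destruct (Hdg m Hm) as [_ [_ Hc]]. apply Hc.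
Qed.

Definition sc (t : R) (x : arr) : arr := fun i j => t * x i j.

Lemma peval_hom d e t x y : hom_expr d e -> peval e (sc t x) (sc t y) = t ^ d * peval e x y.
Proof.
  induction 1; simpl; try (unfold sc; ring).
  rewrite IHhom_expr1, IHhom_expr2; ring.
  rewrite IHhom_expr1, IHhom_expr2, pow_add; ring.
Qed.

Lemma Fs_scale n Q gs m t x y : fam_ok n Q gs -> (1<=m)%nat ->
  Fs gs m (sc t x) (sc t y) = fold_right (fun dg acc => t ^ fst dg * snd dg m x y + acc) 0 gs.
Proof.
  intros Hg Hm; unfold Fs; induction gs as [|dg gs IH]; simpl; auto.
  inversion Hg as [|? ? Hdg Hrest]; subst.
  rewrite IH by auto. f_equal.
  destruct (Hdg m Hm) as [[e [Hb [Hh He]]] _].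
  rewrite !He. apply peval_hom; auto.
Qed.

Definition cyc (m l : nat) : nat := if Nat.eqb l 0 then (m - 1)%nat else if Nat.ltb l m then (l - 1)%nat else l.
Definition tr (i l : nat) : nat := if Nat.eqb l 0 then i else if Nat.eqb l i then 0%nat else l.
Definition zb (i : nat) (x : arr) : arr := fun l j => if Nat.eqb l i then 0 else x l j.

Ltac cases := repeat match goal with
  | |- context [Nat.eqb ?a ?b] => let E := fresh in destruct (Nat.eqb a b) eqn:E;
        [apply Nat.eqb_eq in E | apply Nat.eqb_neq in E]
  | |- context [Nat.ltb ?a ?b] => let E := fresh in destruct (Nat.ltb a b) eqn:E;
        [apply Nat.ltb_lt in E | apply Nat.ltb_ge in E]
  | H : context [Nat.eqb ?a ?b] |- _ => let E := fresh in destruct (Nat.eqb a b) eqn:E;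
        [apply Nat.eqb_eq in E | apply Nat.eqb_neq in E]
  | H : context [Nat.ltb ?a ?b] |- _ => let E := fresh in destruct (Nat.ltb a b) eqn:E;
        [apply Nat.ltb_lt in E | apply Nat.ltb_ge in E]
  end.

Lemma cyc_perm m : (1 <= m)%nat -> is_perm m (cyc m).
Proof. intros Hm; unfold is_perm, cyc; repeat split; intros; cases; lia. Qed.

Lemma tr_perm m i : (i < m)%nat -> is_perm m (tr i).
Proof. intros Hm; unfold is_perm, tr; repeat split; intros; cases; lia. Qed.
Lemma nth_map_seq {A : Type} (h : nat -> A) N l d : (l < N)%nat -> nth l (map h (seq 0 N)) d = h l.
Proof.
  intros. rewrite nth_indep with (d' := h 0%nat) by (rewrite length_map, length_seq; auto).
  rewrite map_nth, seq_nth; auto.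
Qed.

Definition Z0 n gs m := forall u v k, (k < n)%nat -> u 0%nat k = v 0%nat k ->
  Fs gs m u v = Fs gs m (zb 0 u) (zb 0 v).

Lemma Z0_of_Sp n gs f m : fam_ok n (fun m h => sym m h) gs ->
  (forall m, (1<=m)%nat -> f m = Fs gs m) ->
  (forall X z z', degenerate n z z' -> phi ((z,z')::X) f = phi X f) ->
  (1 <= m)%nat -> Z0 n gs m.
Proof.
  intros Hg Hf HSp Hm u v k Hk Huv.
  set (X := map (fun l => (u (S l), v (S l))) (seq 0 (m-1))).
  assert (H := HSp X (u 0%nat) (v 0%nat) (ex_intro _ k (conj Hk Huv))).
  unfold phi in H. simpl length in H.
  assert (HL : length X = (m-1)%nat) by (unfold X; rewrite length_map, length_seq; auto).
  rewrite HL in H. replace (S (m-1)) with m in H by lia.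
  rewrite !Hf in H by lia.
  rewrite (Fs_compat n (fun m h => sym m h) gs m u v Hg Hm).
  match type of H with ?L = ?R => transitivity L; [| rewrite H] end.
  { apply (Fs_local n (fun m h => sym m h) gs (S m)); [exact Hg|lia|].
    intros i j Hi. unfold zero_block. cases; try lia.
      - subst; auto.
      - destruct i as [|i]; simpl; auto.
        unfold X; rewrite nth_map_seq by lia; simpl; auto. }
  rewrite <- (Fs_sym n (fun m h => sym m h) gs m (cyc m) _ _ Hg (fun _ _ h => h) Hm (cyc_perm m Hm)).
  apply (Fs_local n (fun m h => sym m h) gs m); auto.
  intros i j Hi. unfold cyc, zb. cases; try lia; auto.
  unfold X; rewrite nth_map_seq by lia; simpl. replace (S (i-1)) with i by lia; auto.
Qed.

Lemma Z0_of_Rmem n gs m : (1 <= m)%nat -> R_mem n m (Fs gs m) -> Z0 n gs m.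
Proof.
  intros Hm HR u v k Hk Huv.
  assert (H := HR 0%nat k Hm Hk (fun i j => v i j - u i j) (fun i j => v i j + u i j)
    (zb 0 (fun i j => v i j - u i j)) (zb 0 (fun i j => v i j + u i j))).
  unfold in_eta_xi in H.
  replace (fun i j => ((fun i0 j0 => v i0 j0 + u i0 j0) i j - (fun i0 j0 => v i0 j0 - u i0 j0) i j) / 2) with u in H
    by (extensionality i; extensionality j; field).
  replace (fun i j => ((fun i0 j0 => v i0 j0 + u i0 j0) i j + (fun i0 j0 => v i0 j0 - u i0 j0) i j) / 2) with v in H
    by (extensionality i; extensionality j; field).
  replace (fun i j => (zb 0 (fun i0 j0 => v i0 j0 + u i0 j0) i j - zb 0 (fun i0 j0 => v i0 j0 - u i0 j0) i j) / 2) with (zb 0 u) in H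
    by (extensionality i; extensionality j; unfold zb; cases; field).
  replace (fun i j => (zb 0 (fun i0 j0 => v i0 j0 + u i0 j0) i j + zb 0 (fun i0 j0 => v i0 j0 - u i0 j0) i j) / 2) with (zb 0 v) in H
    by (extensionality i; extensionality j; unfold zb; cases; field).
  symmetry; apply H; auto.
  - lra.
  - intros i' j Hi'. unfold zb. cases; try lia; auto.
Qed.

Lemma Rmem_of_Z0 n gs m : fam_ok n (fun m h => sym m h) gs -> (1 <= m)%nat ->
  Z0 n gs m -> R_mem n m (Fs gs m).
Proof.
  intros Hg Hm HZ.
  assert (Hgen : forall i k u v, (i < m)%nat -> (k < n)%nat -> u i k = v i k ->
      Fs gs m u v = Fs gs m (zb i u) (zb i v)).
  { intros i k u v Hi Hk Huv.
    rewrite <- (Fs_sym n (fun m h => sym m h) gs m (tr i) u v Hg (fun _ _ h => h) Hm (tr_perm m i Hi)).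
    rewrite (HZ _ _ k Hk) by (unfold tr; simpl; auto).
    rewrite <- (Fs_sym n (fun m h => sym m h) gs m (tr i) _ _ Hg (fun _ _ h => h) Hm (tr_perm m i Hi)).
    f_equal; extensionality l; extensionality j; unfold zb, tr; cases; subst; try lia; auto. }
  intros i k Hi Hk eta xi eta' xi' He He' Hoff. unfold in_eta_xi.
  rewrite (Hgen i k _ _ Hi Hk) by (rewrite He'; lra).
  rewrite (Hgen i k (fun i0 j => (xi i0 j - eta i0 j) / 2)) by (auto; rewrite He; lra).
  f_equal; extensionality l; extensionality j; unfold zb; cases; auto;
    destruct (Hoff l j) as [A1 A2]; auto; rewrite A1, A2; auto.
Qed.

Lemma Sp_of_Z0 n gs f : fam_ok n (fun m h => sym m h) gs ->
  (forall m, (1<=m)%nat -> f m = Fs gs m) ->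
  (forall m, (1 <= m)%nat -> Z0 n gs m) ->
  forall X z z', degenerate n z z' -> phi ((z,z')::X) f = phi X f.
Proof.
  intros Hg Hf HZ X z z' [k [Hk Hz]].
  unfold phi. simpl length. rewrite !Hf by lia.
  set (r := length X).
  rewrite (HZ (S (S r)) ltac:(lia) _ _ k Hk) by (simpl; cases; try lia; auto).
  rewrite (Fs_compat n (fun m h => sym m h) gs (S r) _ _ Hg) by lia.
  symmetry.
  rewrite <- (Fs_sym n (fun m h => sym m h) gs (S (S r)) (cyc (S (S r))) _ _ Hg (fun _ _ h => h) ltac:(lia) (cyc_perm (S (S r)) ltac:(lia))).
  apply (Fs_local n (fun m h => sym m h) gs); auto; [lia|].
  intros i j Hi. destruct i as [|i].
  - unfold cyc. replace (S (S r) - 1)%nat with (S r) by lia. unfold zb, zero_block.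
    rewrite Nat.eqb_refl. simpl. auto.
  - unfold cyc. replace (Nat.eqb (S i) 0) with false by reflexivity.
    replace (Nat.ltb (S i) (S (S r))) with true by (symmetry; apply Nat.ltb_lt; lia).
    replace (S i - 1)%nat with i by lia.
    unfold zb, zero_block. replace (Nat.eqb (S i) 0) with false by reflexivity.
    replace (Nat.eqb i (S r)) with false by (symmetry; apply Nat.eqb_neq; lia).
    cases; try lia; simpl; auto.
Qed.
Fixpoint P (N : nat) (F : nat -> R) (t : R) : R :=
  match N with O => 0 | S N' => F O + t * P N' (fun d => F (S d)) t end.

Lemma P_ext N F G t : (forall d, F d = G d) -> P N F t = P N G t.
Proof.
  revert F G; induction N; intros F G H; simpl; auto.
  rewrite H, (IHN (fun d => F (S d)) (fun d => G (S d))); auto.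
Qed.

Lemma P_add N F G t : P N (fun d => F d + G d) t = P N F t + P N G t.
Proof.
  revert F G; induction N; intros F G; simpl; [ring|].
  rewrite (IHN (fun d => F (S d)) (fun d => G (S d))); ring.
Qed.

Lemma P_sub N F G t : P N (fun d => F d - G d) t = P N F t - P N G t.
Proof.
  revert F G; induction N; intros F G; simpl; [ring|].
  rewrite (IHN (fun d => F (S d)) (fun d => G (S d))); ring.
Qed.

Lemma P_zero N t : P N (fun _ => 0) t = 0.
Proof. induction N; simpl; auto. rewrite IHN; ring. Qed.

Lemma P_delta N k c t : (k < N)%nat ->
  P N (fun d => if Nat.eqb k d then c else 0) t = c * t ^ k.
Proof.
  revert k; induction N; intros k Hk; [lia|]. simpl.
  destruct k as [|k].
  - simpl. rewrite P_zero; ring.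
  - simpl. rewrite (IHN k) by lia. ring.
Qed.

Lemma P_bound N F : exists M, 0 <= M /\ forall t, Rabs t <= 1 -> Rabs (P N F t) <= M.
Proof.
  revert F; induction N; intros F.
  - exists 0; split; [lra|]; intros; simpl; rewrite Rabs_R0; lra.
  - destruct (IHN (fun d => F (S d))) as [M [HM HB]].
    exists (Rabs (F 0%nat) + M). split; [pose proof (Rabs_pos (F 0%nat)); lra|].
    intros t Ht; simpl. specialize (HB t Ht).
    eapply Rle_trans; [apply Rabs_triang|]. rewrite Rabs_mult.
    pose proof (Rabs_pos t). pose proof (Rabs_pos (P N (fun d => F (S d)) t)). nra.
Qed.

Lemma small_zero a M : 0 <= M -> (forall t, 0 < t <= 1 -> Rabs a <= t * M) -> a = 0.
Proof.
  intros HM H. destruct (Req_dec a 0) as [|Ha]; auto. exfalso.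
  assert (Hp : 0 < Rabs a) by (apply Rabs_pos_lt; auto).
  set (s := Rabs a + M). set (t := Rabs a / s).
  assert (Hs : 0 < s) by (unfold s; lra).
  assert (Hts : t * s = Rabs a) by (unfold t; field; lra).
  assert (Ht0 : 0 < t) by (unfold t; apply Rdiv_lt_0_compat; lra).
  assert (Ht1 : t <= 1) by (apply (Rmult_le_reg_r s); [lra|]; rewrite Hts, Rmult_1_l; unfold s; lra).
  specialize (H t (conj Ht0 Ht1)).
  assert (Rabs a * s <= t * M * s) by (apply Rmult_le_compat_r; lra).
  unfold s in *. nra.
Qed.

Lemma P_root_nz N F : (forall t, t <> 0 -> P N F t = 0) -> forall d, (d < N)%nat -> F d = 0.
Proof.
  revert F; induction N; intros F H d Hd; [lia|].
  assert (HF0 : F 0%nat = 0).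
  { destruct (P_bound N (fun d => F (S d))) as [M [HM HB]].
    apply (small_zero _ M HM). intros t Ht.
    specialize (H t ltac:(lra)). simpl in H.
    replace (F 0%nat) with (- (t * P N (fun d => F (S d)) t)) by lra.
    rewrite Rabs_Ropp, Rabs_mult, (Rabs_right t) by lra.
    apply Rmult_le_compat_l; [lra|]. apply HB. rewrite Rabs_right; lra. }
  destruct d as [|d]; auto.
  apply (IHN (fun d => F (S d))); [|lia].
  intros t Ht. specialize (H t Ht). simpl in H. rewrite HF0 in H.
  destruct (Rmult_integral t (P N (fun d => F (S d)) t)) as [|]; [lra|lra|auto].
Qed.

Definition comp (gs : list (nat * (nat -> func))) (d m : nat) : func :=
  fun x y => fold_right (fun dg acc => (if Nat.eqb (fst dg) d then snd dg m x y else 0) + acc) 0 gs.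

Lemma comp_P gs N m x y t : Forall (fun dg => (fst dg < N)%nat) gs ->
  P N (fun d => comp gs d m x y) t = fold_right (fun dg acc => t ^ fst dg * snd dg m x y + acc) 0 gs.
Proof.
  induction gs as [|dg gs IH]; intros HN.
  - simpl. apply P_zero.
  - inversion HN; subst. simpl.
    transitivity (P N (fun d => (if Nat.eqb (fst dg) d then snd dg m x y else 0) + comp gs d m x y) t).
    { apply P_ext; intros; reflexivity. }
    rewrite P_add, P_delta, IH by auto. rewrite Rmult_comm; reflexivity.
Qed.

Lemma comp_seq gs N k m x y :
  fold_right (fun dg acc => snd dg m x y + acc) 0 (map (fun d => (d, comp gs d)) (seq k N))
  = P N (fun d => comp gs (k + d) m x y) 1.
Proof.
  revert k; induction N; intros k; simpl; auto.
  rewrite IHN, Nat.add_0_r. f_equal. rewrite Rmult_1_l. apply P_ext. intros d.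
  rewrite Nat.add_succ_r. reflexivity.
Qed.

Lemma fold_one gs m x y :
  fold_right (fun dg acc => 1 ^ fst dg * snd dg m x y + acc) 0 gs = Fs gs m x y.
Proof.
  unfold Fs; induction gs; simpl; auto. rewrite pow1, IHgs; ring.
Qed.

Definition maxdeg (gs : list (nat * (nat -> func))) : nat :=
  fold_right (fun dg acc => Nat.max (fst dg) acc) 0%nat gs.

Lemma maxdeg_lt gs : Forall (fun dg => (fst dg < S (maxdeg gs))%nat) gs.
Proof.
  induction gs; constructor; simpl; [lia|].
  eapply Forall_impl; [|exact IHgs]. simpl; intros; lia.
Qed.

Lemma comp_hom n Q gs d m : fam_ok n Q gs -> (1 <= m)%nat -> hom_poly n m d (comp gs d m).
Proof.
  intros Hg Hm. induction gs as [|[dd gg] gs IH].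
  - exists (PConst 0). split; [exact I|]. split; [constructor|]. intros; reflexivity.
  - inversion Hg as [|? ? Hdg Hrest]; subst.
    destruct (IH Hrest) as [er [Hbr [Hhr Her]]].
    destruct (Hdg m Hm) as [[e [Hb [Hh He]]] _].
    unfold comp in *; simpl.
    simpl in Hh, He. destruct (Nat.eqb dd d) eqn:E.
    + apply Nat.eqb_eq in E. rewrite E in Hh.
      exists (PAdd e er). split; [split; auto|]. split; [constructor; auto|].
      intros; simpl; rewrite He, Her; reflexivity.
    + exists (PAdd (PConst 0) er). split; [split; simpl; auto|]. split; [constructor; auto; constructor|].
      intros; simpl; rewrite Her; reflexivity.
Qed.

Lemma comp_sym n gs d m : fam_ok n (fun m h => sym m h) gs -> (1 <= m)%nat -> sym m (comp gs d m).
Proof.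
  intros Hg Hm s Hs x y. unfold comp. induction gs as [|[dd gg] gs IH]; simpl; auto.
  inversion Hg as [|? ? Hdg Hrest]; subst. rewrite IH by auto. f_equal.
  destruct (Nat.eqb dd d); auto. destruct (Hdg m Hm) as [_ [HS _]]. apply HS; auto.
Qed.

Lemma comp_compat n Q gs d m : fam_ok n Q gs -> (1 <= m)%nat -> compat_at m (comp gs d).
Proof.
  intros Hg Hm x y. unfold comp. induction gs as [|[dd gg] gs IH]; simpl; auto.
  inversion Hg as [|? ? Hdg Hrest]; subst. rewrite IH by auto. f_equal.
  destruct (Nat.eqb dd d); auto. destruct (Hdg m Hm) as [_ [_ HC]]. apply HC.
Qed.

Lemma in_eta_xi_sc h t E Xi : in_eta_xi h (sc t E) (sc t Xi) =
  h (sc t (fun i j => (Xi i j - E i j)/2)) (sc t (fun i j => (Xi i j + E i j)/2)).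
Proof. unfold in_eta_xi, sc. f_equal; extensionality i; extensionality j; field. Qed.

Lemma comp_Rmem n Q gs m N d : fam_ok n Q gs -> (1<=m)%nat ->
  Forall (fun dg => (fst dg < N)%nat) gs -> (d < N)%nat ->
  R_mem n m (Fs gs m) -> R_mem n m (comp gs d m).
Proof.
  intros Hg Hm HN Hd HR i k Hi Hk eta xi eta' xi' He He' Hoff.
  unfold in_eta_xi.
  set (x := fun i j => (xi i j - eta i j)/2). set (y := fun i j => (xi i j + eta i j)/2).
  set (x' := fun i j => (xi' i j - eta' i j)/2). set (y' := fun i j => (xi' i j + eta' i j)/2).
  set (F := fun d => comp gs d m x' y' - comp gs d m x y).
  assert (HP : forall t, t <> 0 -> P N F t = 0).
  { intros t _. unfold F. rewrite P_sub, !comp_P by auto.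
    rewrite <- !(Fs_scale n Q gs m) by auto.
    assert (HRt := HR i k Hi Hk (sc t eta) (sc t xi) (sc t eta') (sc t xi')).
    rewrite !in_eta_xi_sc in HRt. unfold x, y, x', y'. rewrite HRt; [ring| | |].
    - unfold sc; rewrite He; ring.
    - unfold sc; rewrite He'; ring.
    - intros i' j Hne; unfold sc; destruct (Hoff i' j Hne) as [A1 A2]; rewrite A1, A2; auto. }
  pose proof (P_root_nz N F HP d Hd). unfold F in H. lra.
Qed.

Lemma Fs_Rmem n Q gs m : fam_ok n Q gs -> (forall m h, Q m h -> R_mem n m h) -> (1<=m)%nat ->
  R_mem n m (Fs gs m).
Proof.
  intros Hg HQ Hm i k Hi Hk eta xi eta' xi' He He' Hoff. unfold in_eta_xi, Fs.
  induction gs as [|dg gs IH]; simpl; auto.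
  inversion Hg as [|? ? Hdg Hrest]; subst. rewrite IH by auto. f_equal.
  destruct (Hdg m Hm) as [_ [HQm _]]. apply (HQ _ _ HQm i k Hi Hk); auto.
Qed.

Lemma comp_lemma n gs : fam_ok n (fun m h => sym m h) gs ->
  (forall m, (1<=m)%nat -> R_mem n m (Fs gs m)) ->
  exists gs', fam_ok n (fun m h => R_mem n m h /\ sym m h) gs' /\
     forall m, (1<=m)%nat -> forall x y, Fs gs' m x y = Fs gs m x y.
Proof.
  intros Hg HR.
  exists (map (fun d => (d, comp gs d)) (seq 0 (S (maxdeg gs)))). split.
  - unfold fam_ok. apply Forall_forall. intros [d h] Hin.
    apply in_map_iff in Hin. destruct Hin as [d' [Heq Hin]]. inversion Heq; subst.
    apply in_seq in Hin. intros m Hm. simpl.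
    split; [apply (comp_hom n (fun m h => sym m h) gs); auto|].
    split; [split|].
    + apply (comp_Rmem n (fun m h => sym m h) gs m (S (maxdeg gs))); auto; [apply maxdeg_lt|lia].
    + apply (comp_sym n); auto.
    + apply (comp_compat n (fun m h => sym m h)); auto.
  - intros m Hm x y. unfold Fs at 1. rewrite comp_seq.
    rewrite <- (fold_one gs m x y), <- (comp_P gs (S (maxdeg gs)) m x y 1 (maxdeg_lt gs)). apply P_ext; intros; reflexivity.
Qed.

Lemma part1 n f : in_Afin n f -> (in_Sp n f <-> forall m, (1<=m)%nat -> R_mem n m (f m)).
Proof.
  intros HA. pose proof HA as [gs [Hg Hf]].
  assert (Hfe : forall m, (1<=m)%nat -> f m = Fs gs m)
    by (intros m Hm; extensionality x; extensionality y; unfold Fs; apply Hf; auto).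
  split.
  - intros [_ HSp] m Hm. rewrite Hfe by auto.
    apply Rmem_of_Z0; auto. apply (Z0_of_Sp n gs f); auto.
  - intros HR. split; auto.
    apply (Sp_of_Z0 n gs f); auto.
    intros m Hm. apply Z0_of_Rmem; auto. rewrite <- Hfe; auto.
Qed.

Theorem proposition2p4 (n : nat) (hn : (1 <= n)%nat) :
  (forall f, in_Afin n f ->
     (in_Sp n f <-> forall m, (1 <= m)%nat -> R_mem n m (f m))) /\
  (forall f, in_Sp n f <-> (graded_lim n (fun m h => R_mem n m h) f /\ in_Afin n f)) /\
  (forall f, in_Sp n f <->
     graded_lim n (fun m h => R_mem n m h /\ sym m h) f).
Proof.
  assert (Hfwd : forall f, in_Sp n f -> graded_lim n (fun m h => R_mem n m h /\ sym m h) f).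
  { intros f HS. pose proof HS as [HA _].
    pose proof (proj1 (part1 n f HA) HS) as HR.
    destruct HA as [gs [Hg Hf]].
    assert (Hfe : forall m, (1<=m)%nat -> f m = Fs gs m)
      by (intros m Hm; extensionality x; extensionality y; unfold Fs; apply Hf; auto).
    destruct (comp_lemma n gs Hg) as [gs' [Hg' Hgs']].
    { intros m Hm; rewrite <- Hfe; auto. }
    exists gs'. split; [exact Hg'|]. intros m Hm x y. rewrite Hf by auto.
    symmetry; apply Hgs'; auto. }
  assert (Hbwd : forall Q f, (forall m h, Q m h -> R_mem n m h) -> graded_lim n Q f ->
     in_Afin n f -> in_Sp n f).
  { intros Q f HQ [gs [Hg Hf]] HA. apply (part1 n f HA). intros m Hm.
    assert (Hfe : f m = Fs gs m)
      by (extensionality x; extensionality y; unfold Fs; apply Hf; auto).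
    rewrite Hfe. apply (Fs_Rmem n Q); auto. }
  assert (Hweak : forall Q f, (forall m h, Q m h -> sym m h) -> graded_lim n Q f -> in_Afin n f).
  { intros Q f HQ [gs [Hg Hf]]. exists gs. split; auto.
    apply (fam_ok_weaken n Q); auto. }
  split; [|split].
  - intros f HA; apply part1; auto.
  - intros f; split.
    + intros HS. split; [|exact (proj1 HS)].
      destruct (Hfwd f HS) as [gs [Hg Hf]]. exists gs; split; auto.
      apply (fam_ok_weaken n (fun m h => R_mem n m h /\ sym m h)); [tauto|auto].
    + intros [HG HA]. apply (Hbwd _ f (fun m h H => H) HG HA).
  - intros f; split; auto.
    intros HG. apply (Hbwd _ f (fun m h H => proj1 H) HG).
    apply (Hweak _ f (fun m h H => proj2 H) HG).
Qed.
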